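(* Let $B$ be a UFD and $A$ a subring of $B$. Then the following are equivalent: (I) $A$ is a retract of $B$ and $A=B^{\phi}$ for some $\phi\in\operatorname{Exp}_A(B)$ with $\phi\neq\mathrm{Id}$; (II) $B=A^{[1]}$, i.e. $B=A[T]$ for some $T\in B$ transcendental over $A$. In particular, if $R$ is a UFD and $A$ is an $R$-subalgebra of the polynomial ring $B=R[X_1,\dots,X_n]$ satisfying (I), then $B=A^{[1]}$.
   Context: A subring $A$ of a ring $B$ is a retract of $B$ if there is an idempotent ring endomorphism $\pi:B\to B$ with $\pi(B)=A$. For a ring $B$ and an indeterminate $U$, an exponential map on $B$ over a subring $C$ is a $C$-algebra homomorphism $\phi_U:B\to B[U]$ such that composing with evaluation at $U=0$ gives the identity on $B$ and $\phi_V\phi_U=\phi_{V+U}$ (with $\phi_V$ extended to $B[U]\to B[V,U]$ by $\phi_V(U)=U$). $\operatorname{Exp}_C(B)$ denotes the set of these; $B^{\phi}=\{b\in B:\phi(b)=b\}$ is the ring of invariants. *)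

(* Defs.v *)
From HB Require Import structures.
From mathcomp Require Import all_boot all_order all_algebra.
Set Implicit Arguments. Unset Strict Implicit. Unset Printing Implicit Defensive.
Import Order.TTheory GRing.Theory Num.Theory.
Local Open Scope ring_scope.

Definition associated (R : idomainType) (x y : R) : Prop :=
  exists u : R, u \is a GRing.unit /\ y = u * x.

Definition irreducible_elt (R : idomainType) (x : R) : Prop :=
  [/\ x != 0, x \isn't a GRing.unit &
      forall a b : R, x = a * b -> a \is a GRing.unit \/ b \is a GRing.unit].

Definition is_UFD (R : idomainType) : Prop :=
  (forall x : R, x != 0 -> x \isn't a GRing.unit ->
     exists s : seq R, (forall p, p \in s -> irreducible_elt p) /\ x = \prod_(p <- s) p)
  /\
  (forall s t : seq R,
     (forall p, p \in s -> irreducible_elt p) ->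
     (forall p, p \in t -> irreducible_elt p) ->
     \prod_(p <- s) p = \prod_(p <- t) p ->
     exists t' : seq R, perm_eq t t' /\ size s = size t' /\
       forall i, (i < size s)%N -> associated (nth 0 s i) (nth 0 t' i)).

Definition is_retract (B : comNzRingType) (A : pred B) : Prop :=
  exists pi : {rmorphism B -> B},
    (forall b, pi (pi b) = pi b) /\
    (forall x, x \in A <-> exists b, pi b = x).

(* phi : B -> B[U] ({poly B}, variable U).  B[V,U] is represented as
   {poly {poly B}}: outer variable U, inner variable V.
   - phi_V extended to B[U] -> B[V,U] (with U |-> U) is  map_poly phi.
   - phi_{V+U}(b) is (phi b) with its variable replaced by V + U, i.e.
     (phi b)^:P \Po ('X + ('X)%:P)  (outer 'X = U, ('X)%:P = V). *)
Definition is_exp_map (B : comNzRingType) (C : pred B)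
  (phi : {rmorphism B -> {poly B}}) : Prop :=
  [/\ (forall c, c \in C -> phi c = c%:P),
      (forall b, (phi b).[0] = b)
    & (forall b, map_poly phi (phi b) = (phi b)^:P \Po ('X + ('X)%:P))].

Definition invariants (B : comNzRingType) (phi : B -> {poly B}) : pred B :=
  fun b => phi b == b%:P.

Definition exp_map_is_id (B : comNzRingType) (phi : B -> {poly B}) : Prop :=
  forall b, phi b = b%:P.

Definition is_poly_ring_in_one_var_over (B : comNzRingType) (A : pred B) : Prop :=
  exists T : B,
    (forall b : B, exists p : {poly B}, p \is a polyOver A /\ b = p.[T]) /\
    (forall p : {poly B}, p \is a polyOver A -> p.[T] = 0 -> p = 0).

Fixpoint poly_ring_n (R : idomainType) (n : nat) : idomainType :=
  match n with
  | 0 => R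
  | n'.+1 => {poly (poly_ring_n R n')}
  end.

Fixpoint const_n (R : idomainType) (n : nat) : R -> poly_ring_n R n :=
  match n return R -> poly_ring_n R n with
  | 0 => fun r => r
  | n'.+1 => fun r => (const_n n' r)%:P
  end.

(* Main.v *)
Require Import Defs.
From HB Require Import structures.
From mathcomp Require Import all_boot all_order all_algebra.
From Stdlib Require Import Classical.
From mathcomp Require Import ring zify.
Set Implicit Arguments. Unset Strict Implicit. Unset Printing Implicit Defensive.
Import Order.TTheory GRing.Theory Num.Theory.
Local Open Scope ring_scope.

Section Dvd.
Variable D : idomainType.
Implicit Types x y z p q u : D.

Definition rdvd x y := exists z, y = z * x.
Definition primeE p := [/\ p != 0, p \isn't a GRing.unit &
   forall x y, rdvd p (x * y) -> rdvd p x \/ rdvd p y].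
Definition all_primes (s : seq D) := forall q, q \in s -> primeE q.
Definition PF := forall x : D, x != 0 -> exists u (s : seq D),
   [/\ u \is a GRing.unit, all_primes s & x = u * \prod_(q <- s) q].

Lemma rdvd_refl x : rdvd x x. Proof. by exists 1; rewrite mul1r. Qed.
Lemma rdvd0 x : rdvd x 0. Proof. by exists 0; rewrite mul0r. Qed.
Lemma rdvd_trans x y z : rdvd x y -> rdvd y z -> rdvd x z.
Proof. by move=> [a ->] [b ->]; exists (b * a); rewrite mulrA. Qed.
Lemma rdvd_mull x y z : rdvd x y -> rdvd x (z * y).
Proof. by move=> [a ->]; exists (z * a); rewrite mulrA. Qed.
Lemma rdvd_mulr x y z : rdvd x y -> rdvd x (y * z).
Proof. by move=> h; rewrite mulrC; apply: rdvd_mull. Qed.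
Lemma rdvdD x y z : rdvd x y -> rdvd x z -> rdvd x (y + z).
Proof. by move=> [a ->] [b ->]; exists (a + b); rewrite mulrDl. Qed.
Lemma rdvdN x y : rdvd x y -> rdvd x (- y).
Proof. by move=> [a ->]; exists (- a); rewrite mulNr. Qed.
Lemma rdvdB x y z : rdvd x y -> rdvd x z -> rdvd x (y - z).
Proof. by move=> h1 h2; apply: rdvdD => //; apply: rdvdN. Qed.
Lemma rdvd_unit x u : rdvd x u -> u \is a GRing.unit -> x \is a GRing.unit.
Proof. by move=> [a ->]; rewrite unitrM => /andP[]. Qed.

Lemma rdvd_prod_mem (s : seq D) q : q \in s -> rdvd q (\prod_(p <- s) p).
Proof. by move=> qs; rewrite (big_rem _ qs) /=; exists (\prod_(p <- rem q s) p); rewrite mulrC. Qed.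

Lemma prime_dvd_prod p s : primeE p -> rdvd p (\prod_(q <- s) q) ->
  exists2 q, q \in s & rdvd p q.
Proof.
move=> [p0 pu pp]; elim: s => [|a s IH]; rewrite ?big_nil ?big_cons.
  by move=> h; case/negP: pu; apply: rdvd_unit h _; rewrite unitr1.
case/pp => [h|/IH [q qs h]]; first by exists a; rewrite ?mem_head.
by exists q => //; rewrite inE qs orbT.
Qed.

Lemma unit_of_mul1 x y : x * y = 1 -> x \is a GRing.unit.
Proof. by move=> h; apply/unitrP; exists y; rewrite mulrC h. Qed.

Lemma prime_dvd_prime p q : primeE p -> primeE q -> rdvd p q ->
  exists2 w, w \is a GRing.unit & q = w * p.
Proof.
move=> [p0 pu pp] [q0 qu qp] [z qE]; exists z => //.
have : rdvd q (z * p) by rewrite -qE; apply: rdvd_refl.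
case/qp => [[y zE]|[y pE]].
  exfalso; case/negP: pu; apply: (@unit_of_mul1 _ y).
  apply: (mulfI q0); rewrite mulr1 {2}qE zE; ring.
apply: (@unit_of_mul1 _ y); apply: (mulIf q0); rewrite mul1r {2}qE pE; ring.
Qed.

Lemma prime_mul_unit p u : primeE p -> u \is a GRing.unit -> primeE (u * p).
Proof.
move=> [p0 pu pp] uu; split.
- have u0 : u != 0 by apply: contraTneq uu => ->; rewrite unitr0.
  by rewrite mulf_neq0.
- by rewrite unitrM uu.
move=> x y [z hz].
have : rdvd p (x * y) by exists (z * u); rewrite hz mulrA.
case/pp=> [[a ->]|[a ->]]; [left|right]; exists (a * u^-1);
  by rewrite -mulrA (mulrA _ u) mulVr // mul1r.
Qed.

End Dvd.

Section UFD.
Variable D : idomainType.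
Implicit Types x y z p q u : D.

Lemma unit_neq0 u : u \is a GRing.unit -> u != 0.
Proof. by move=> uu; apply: contraTneq uu => ->; rewrite unitr0. Qed.

Lemma irr_mul_unit q u : irreducible_elt q -> u \is a GRing.unit ->
  irreducible_elt (u * q).
Proof.
move=> [q0 qu qi] uu; split.
- by rewrite mulf_neq0 // unit_neq0.
- by rewrite unitrM uu.
move=> a b h.
have : q = (u^-1 * a) * b by rewrite -mulrA -h mulrA mulVr // mul1r.
case/qi => [|->]; last by right.
by rewrite unitrM unitrV uu /= => ->; left.
Qed.

Lemma UFD_fact (hU : is_UFD D) x : x != 0 -> exists u (s : seq D),
  [/\ u \is a GRing.unit, (forall p, p \in s -> irreducible_elt p) &
      x = u * \prod_(q <- s) q].
Proof.
move=> x0; have [xu|xnu] := boolP (x \is a GRing.unit).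
  by exists x, [::]; split => //; rewrite big_nil mulr1.
have [s [hs ->]] := hU.1 x x0 xnu.
by exists 1, s; split; rewrite ?unitr1 ?mul1r.
Qed.

Lemma irr_prime (hU : is_UFD D) q : irreducible_elt q -> primeE q.
Proof.
move=> qi; have [q0 qu _] := qi; split => // x y [z hz].
have [->|x0] := eqVneq x 0; first by left; apply: rdvd0.
have [->|y0] := eqVneq y 0; first by right; apply: rdvd0.
have xy0 : x * y != 0 by rewrite mulf_neq0.
have z0 : z != 0 by apply: contraNneq xy0 => z0; rewrite hz z0 mul0r.
have [ux [sx [uxu sxi xE]]] := UFD_fact hU x0.
have [uy [sy [uyu syi yE]]] := UFD_fact hU y0.
have [uz [sz [uzu szi zE]]] := UFD_fact hU z0.
suff [e] : exists2 e, e \in sx ++ sy & rdvd q e.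
  rewrite mem_cat => /orP[] es hq; [left|right].
    by rewrite xE; apply: rdvd_mull; apply: rdvd_trans hq (rdvd_prod_mem es).
  by rewrite yE; apply: rdvd_mull; apply: rdvd_trans hq (rdvd_prod_mem es).
case eR : (sx ++ sy) => [|a R'].
  exfalso; move: qu; apply/negP/negPn.
  have : x * y \is a GRing.unit.
    have -> : x * y = ux * uy * \prod_(p <- sx ++ sy) p by rewrite big_cat xE yE /=; ring.
    by rewrite eR big_nil mulr1 unitrM uxu.
  by rewrite hz unitrM => /andP[].
have hL : forall p, p \in (uz * q) :: sz -> irreducible_elt p.
  move=> p; rewrite inE => /orP[/eqP->|]; last exact: szi.
  by apply: irr_mul_unit.
have hT : forall p, p \in (ux * uy * a) :: R' -> irreducible_elt p.
  move=> p; rewrite inE => /orP[/eqP->|pR].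
    apply: irr_mul_unit; last by rewrite unitrM uxu.
    have : a \in sx ++ sy by rewrite eR mem_head.
    by rewrite mem_cat => /orP[]; [exact: sxi|exact: syi].
  have : p \in sx ++ sy by rewrite eR inE pR orbT.
  by rewrite mem_cat => /orP[]; [exact: sxi|exact: syi].
have hP : \prod_(p <- (uz * q) :: sz) p = \prod_(p <- (ux * uy * a) :: R') p.
  rewrite !big_cons; transitivity (x * y).
    by rewrite hz zE; ring.
  have -> : x * y = ux * uy * \prod_(p <- sx ++ sy) p by rewrite big_cat xE yE /=; ring.
  by rewrite eR big_cons; ring.
have [t' [pt [st ht]]] := hU.2 _ _ hL hT hP.
have [w [wu wE]] := ht 0%N isT.
have t'0 : nth 0 t' 0 \in (ux * uy * a) :: R'.
  by rewrite (perm_mem pt) mem_nth // -st.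
move: t'0; rewrite inE => /orP[/eqP h|hR].
  exists a; first by rewrite ?eR mem_head.
  exists ((ux * uy)^-1 * w * uz).
  have uu : ux * uy \is a GRing.unit by rewrite unitrM uxu.
  apply: (mulfI (unit_neq0 uu)); rewrite -h wE /=.
  by rewrite !mulrA mulrV // mul1r.
exists (nth 0 t' 0); first by rewrite ?eR inE hR orbT.
by exists (w * uz); rewrite wE /= mulrA.
Qed.

Lemma UFD_PF (hU : is_UFD D) : PF D.
Proof.
move=> x x0; have [u [s [uu si xE]]] := UFD_fact hU x0.
by exists u, s; split => // p ps; apply: (irr_prime hU (si _ ps)).
Qed.

End UFD.

Section PolyPF.
Variable D : idomainType.
Implicit Types x y z p q u c : D.
Implicit Types f g h : {poly D}.

Lemma poly_decomp f : f = Poly (behead f) * 'X + (f`_0)%:P.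
Proof.
apply/polyP => i; rewrite coefD coefMX coefC coef_Poly.
by case: i => [|i] /=; rewrite ?add0r ?addr0 // nth_behead.
Qed.

Lemma size_decomp f : f != 0 -> (size (Poly (behead f)) < size f)%N.
Proof.
move=> f0; apply: (leq_ltn_trans (size_Poly _)); rewrite size_behead.
by rewrite prednK // lt0n size_poly_eq0.
Qed.

Lemma rdvdC_X c h : c != 0 -> rdvd c%:P (h * 'X) -> rdvd c%:P h.
Proof.
move=> c0 [z hz].
have z00 : z`_0 = 0.
  have := congr1 (fun k : {poly D} => k`_0) hz; rewrite /= coefMX coefMC /=.
  by move/esym/eqP; rewrite mulf_eq0 (negbTE c0) orbF => /eqP.
have X0 : ('X : {poly D}) != 0 by rewrite polyX_eq0.
exists (Poly (behead z)); apply: (mulIf X0).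
rewrite hz {1}[z]poly_decomp z00 addr0; ring.
Qed.

Lemma rdvdC_coef c h i : rdvd c%:P h -> rdvd c h`_i.
Proof. by move=> [z ->]; exists z`_i; rewrite coefMC. Qed.

Lemma primeC p : primeE p -> primeE (p%:P : {poly D}).
Proof.
move=> pp; have [p0 pu ppr] := pp; split.
- by rewrite polyC_eq0.
- by rewrite poly_unitE coefC /= size_polyC p0.
suff main : forall n f g, (size f + size g < n)%N -> rdvd p%:P (f * g) ->
   rdvd p%:P f \/ rdvd p%:P g.
  by move=> f g; apply: main (ltnSn _).
elim => [//|n IH] f g hs hfg.
have key : forall f g, (size f + size g < n.+1)%N -> rdvd p%:P (f * g) ->
   rdvd p f`_0 -> rdvd p%:P f \/ rdvd p%:P g.
  move=> {}f {}g {}hs {}hfg [a ha].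
  have [->|f0] := eqVneq f 0; first by left; apply: rdvd0.
  have h1 : rdvd p%:P (Poly (behead f) * g * 'X).
    have -> : Poly (behead f) * g * 'X = f * g - (f`_0)%:P * g.
      by rewrite {2}[f]poly_decomp; ring.
    apply: rdvdB => //; exists (a%:P * g); rewrite ha polyCM; ring.
  have := rdvdC_X p0 h1 => /IH [||]; last by right.
    by rewrite -ltnS (leq_trans _ hs) // ltnS ltn_add2r size_decomp.
  move=> [w hw]; left; exists (w * 'X + a%:P).
  by rewrite [f]poly_decomp hw ha polyCM; ring.
have h0 : rdvd p (f`_0 * g`_0) by rewrite -coef0M; apply: rdvdC_coef.
case/ppr: h0 => h0; first exact: key.
have := key g f; rewrite addnC mulrC => /(_ hs hfg h0) [] h; by [right|left].
Qed.

End PolyPF.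

Lemma ex_min_nat (P : nat -> Prop) n : P n -> exists m, P m /\ forall k, P k -> (m <= k)%N.
Proof.
elim: n {-2}n (leqnn n) => [|N IH] n hn Pn.
  by exists n; split => // k _; move: hn; rewrite leqn0 => /eqP->.
case: (classic (exists k, P k /\ (k < n)%N)) => [[k [Pk kn]]|h].
  by apply: (IH k) => //; rewrite -ltnS (leq_trans kn hn).
exists n; split => // k Pk; rewrite leqNgt; apply/negP => kn; apply: h; by exists k.
Qed.

Section Peel.
Variable E : idomainType.
Implicit Types x y z p q u f w : E.

Lemma peel_div u (s : seq E) f y w : u \is a GRing.unit -> all_primes s ->
  (forall p, p \in s -> ~ rdvd p f) ->
  (u * \prod_(p <- s) p) * y = w * f -> rdvd f y.
Proof.
move=> uu; elim: s w => [|p s IH] w hs hnd.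
  by rewrite big_nil mulr1 => h; exists (u^-1 * w); rewrite -mulrA -h mulrA mulVr ?mul1r.
rewrite big_cons => h.
have pp : primeE p by apply: hs; rewrite mem_head.
have [p0 _ ppr] := pp.
have : rdvd p (w * f) by rewrite -h; exists (u * \prod_(j <- s) j * y); ring.
case/ppr => [[w1 hw1]|]; last by move=> hf; exfalso; apply: (hnd p) => //; rewrite mem_head.
apply: (IH w1).
- by move=> q qs; apply: hs; rewrite inE qs orbT.
- by move=> q qs; apply: hnd; rewrite inE qs orbT.
apply: (mulfI p0); transitivity (w * f); first by rewrite -h; ring.
by rewrite hw1; ring.
Qed.

End Peel.

Section PolyUFD.
Variable D : idomainType.
Hypothesis hD : PF D.
Implicit Types f g h m q : {poly D}.

Lemma prod_polyC (s : seq D) :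
  \prod_(p <- map polyC s) p = (\prod_(p <- s) p)%:P.
Proof. by rewrite big_map rmorph_prod. Qed.

Lemma all_primesC (s : seq D) : all_primes s -> all_primes (map polyC s).
Proof. by move=> hs p /mapP [q qs ->]; apply: primeC; apply: hs. Qed.

Lemma peel_div_C (c : D) f y w : c != 0 ->
  (forall p, primeE p -> ~ rdvd p%:P f) -> c%:P * y = w * f -> rdvd f y.
Proof.
move=> c0 hf h; have [u [s [uu hs cE]]] := hD c0.
apply: (@peel_div _ u%:P (map polyC s) f y w).
- exact: rmorph_unit.
- exact: all_primesC.
- by move=> p /mapP [q qs ->]; apply: hf; apply: hs.
by rewrite prod_polyC -polyCM -cE.
Qed.

Lemma peel2 u (s : seq D) f q m : u \is a GRing.unit -> all_primes s ->
  (u * \prod_(p <- s) p)%:P * f = q * m ->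
  exists q' m' (c : D), [/\ c != 0, u%:P * f = q' * m' & m = c%:P * m'].
Proof.
move=> uu; elim: s q m => [|p s IH] q m hs.
  by rewrite big_nil mulr1 => h; exists q, m, 1; split; rewrite ?oner_neq0 ?mul1r.
rewrite big_cons => h.
have pp : primeE (p%:P : {poly D}) by apply: primeC; apply: hs; rewrite mem_head.
have [p0 _ ppr] := pp.
have hs' : all_primes s by move=> r rs; apply: hs; rewrite inE rs orbT.
have : rdvd p%:P (q * m) by rewrite -h; exists ((u * \prod_(j <- s) j)%:P * f);
   rewrite !polyCM; ring.
case/ppr => [[q1 hq1]|[m1 hm1]].
  apply: (IH q1 m) => //; apply: (mulfI p0); transitivity (q * m).
    by rewrite -h !polyCM; ring.
  by rewrite hq1; ring.
have [q' [m' [c [c0 e1 e2]]]] : exists q' m' (c : D),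
    [/\ c != 0, u%:P * f = q' * m' & m1 = c%:P * m'].
  apply: (IH q m1) => //; apply: (mulfI p0); transitivity (q * m).
    by rewrite -h !polyCM; ring.
  by rewrite hm1; ring.
have [pn0 _ _] := hs p (mem_head _ _).
exists q', m', (c * p); split => //; first by rewrite mulf_neq0.
by rewrite hm1 e2 polyCM; ring.
Qed.

Lemma unit_poly_const m : m \is a GRing.unit -> m = (m`_0)%:P /\ m`_0 \is a GRing.unit.
Proof. by rewrite poly_unitE => /andP[/eqP s1 u]; split => //; apply: size1_polyC; rewrite s1. Qed.

Lemma prim_irr_prime f : (forall p, primeE p -> ~ rdvd p%:P f) -> (1 < size f)%N ->
  (forall g h, f = g * h -> g \is a GRing.unit \/ h \is a GRing.unit) -> primeE f.
Proof.
move=> hprim hsz hirr.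
have f0 : f != 0 by rewrite -size_poly_gt0 (ltn_trans _ hsz).
split => //.
  by rewrite poly_unitE negb_and; apply/orP; left; rewrite neq_ltn hsz orbT.
move=> g h [k hk].
case: (classic (rdvd f g)) => fg; first by left.
right.
pose J m := exists a b, m = a * g + b * f.
have g0 : g != 0 by apply: contra_notN fg => /eqP->; apply: rdvd0.
have Jg : J g by exists 1, 0; ring.
have Jf : J f by exists 0, 1; ring.
have [n [[m [Jm [m0 szm]]] nmin]] := @ex_min_nat
   (fun n => exists m, J m /\ m != 0 /\ size m = n) (size g)
   (ex_intro _ g (conj Jg (conj g0 erefl))).
have pdiv : forall x, J x -> exists (e : D) q, e != 0 /\ e%:P * x = q * m.
  move=> x [a [b xE]].
  have hd := Pdiv.Idomain.divp_eq x m.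
  set r := x %% m in hd.
  have Jr : J r.
    have [a1 [b1 mE]] := Jm.
    exists ((lead_coef m ^+ scalp x m)%:P * a - (x %/ m) * a1).
    exists ((lead_coef m ^+ scalp x m)%:P * b - (x %/ m) * b1).
    have -> : r = (lead_coef m ^+ scalp x m) *: x - (x %/ m) * m by rewrite hd; ring.
    by rewrite -mul_polyC xE mE; ring.
  have r0 : r = 0.
    apply/eqP; apply/negPn/negP => r0.
    have : (n <= size r)%N by apply: nmin; exists r.
    by rewrite -szm leqNgt Pdiv.Idomain.ltn_modp m0.
  exists (lead_coef m ^+ scalp x m), (x %/ m); split.
    by rewrite expf_neq0 // lead_coef_eq0.
  by rewrite mul_polyC hd r0 addr0.
have [e [q [e0 eE]]] := pdiv f Jf.
have [u [s [uu hs esE]]] := hD e0.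
rewrite esE in eE.
have [q' [m' [c [c0 e1 e2]]]] := peel2 uu hs eE.
have : f = (u^-1%:P * q') * m'.
  by rewrite -mulrA -e1 mulrA -polyCM mulVr // mul1r.
case/hirr => hu.
  (* q' is a unit : m is a multiple of f, so f | g *)
  exfalso; apply: fg.
  have [e' [q2 [e'0 e'E]]] := pdiv g Jg.
  have q'u : q' \is a GRing.unit.
    by move: hu; rewrite unitrM => /andP[].
  have m'E : m' = q'^-1 * (u%:P * f) by rewrite e1 mulKr.
  apply: (@peel_div_C e' f g (q2 * c%:P * q'^-1 * u%:P) e'0 hprim).
  by rewrite e'E e2 m'E !mulrA.
(* m' unit: m is a constant *)
have [m'E m'u] := unit_poly_const hu.
have [a [b mE]] := Jm.
have cm0 : c * m'`_0 != 0 by rewrite mulf_neq0 // unit_neq0.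
apply: (@peel_div_C _ f h (a * k + b * h) cm0 hprim).
have -> : (c * m'`_0)%:P = m by rewrite e2 {2}m'E polyCM.
by rewrite mE mulrDl -(mulrA a) hk; ring.
Qed.

End PolyUFD.

Section PolyPF2.
Variable D : idomainType.
Hypothesis hD : PF D.
Implicit Types f g h m q : {poly D}.

Lemma nonunit_has_prime (c : D) : c != 0 -> c \isn't a GRing.unit ->
  exists2 p, primeE p & rdvd p c.
Proof.
move=> c0 cu; have [u [s [uu hs cE]]] := hD c0.
case: s hs cE => [|p s] hs cE.
  by exfalso; move/negP: cu; apply; rewrite cE big_nil mulr1.
exists p; first by apply: hs; rewrite mem_head.
by rewrite cE big_cons; exists (u * \prod_(j <- s) j); ring.
Qed.

Lemma rdvdCC (p c : D) : rdvd p c -> rdvd (p%:P : {poly D}) c%:P.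
Proof. by move=> [z ->]; exists z%:P; rewrite polyCM. Qed.

Lemma small_nonunit_prime g : g != 0 -> (size g <= 1)%N -> g \isn't a GRing.unit ->
  exists2 p, primeE p & rdvd p%:P g.
Proof.
move=> g0 sg gu; have gE := size1_polyC sg.
have c0 : g`_0 != 0 by apply: contraNneq g0 => h; rewrite gE h.
have cu : g`_0 \isn't a GRing.unit.
  by apply: contraNN gu => h; rewrite gE; apply: rmorph_unit.
have [p pp pd] := nonunit_has_prime c0 cu.
by exists p => //; rewrite gE; apply: rdvdCC.
Qed.

Lemma PF_poly : PF {poly D}.
Proof.
suff main : forall n f, (size f <= n)%N -> f != 0 -> exists u (s : seq {poly D}),
   [/\ u \is a GRing.unit, all_primes s & f = u * \prod_(q <- s) q].
  by move=> f f0; apply: (main _ f (leqnn _) f0).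
elim => [|n IH] f.
  by rewrite leqn0 size_poly_eq0 => /eqP-> /eqP.
have NP : forall f, (size f <= n.+1)%N -> f != 0 ->
    ~ (exists p, primeE p /\ rdvd p%:P f) -> exists u (s : seq {poly D}),
   [/\ u \is a GRing.unit, all_primes s & f = u * \prod_(q <- s) q].
  move=> {}f hsf f0 hnp.
  have [s1|s2] := leqP (size f) 1.
    have fu : f \is a GRing.unit.
      apply/negPn/negP => fu; have [p pp pd] := small_nonunit_prime f0 s1 fu.
      by apply: hnp; exists p.
    by exists f, [::]; split => //; rewrite big_nil mulr1.
  case: (classic (exists g h, [/\ f = g * h, g \isn't a GRing.unit & h \isn't a GRing.unit]))
     => [[g [h [fE gu hu]]]|hirr].
    have g0 : g != 0 by apply: contraNneq f0 => g0; rewrite fE g0 mul0r.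
    have h0 : h != 0 by apply: contraNneq f0 => h0; rewrite fE h0 mulr0.
    have big1 : forall k, k != 0 -> k \isn't a GRing.unit -> rdvd k f -> (1 < size k)%N.
      move=> k k0 ku kf; rewrite ltnNge; apply/negP => sk.
      have [p pp pd] := small_nonunit_prime k0 sk ku.
      by apply: hnp; exists p; split => //; apply: rdvd_trans pd kf.
    have sg := big1 g g0 gu (ex_intro _ h (etrans fE (mulrC _ _))).
    have sh := big1 h h0 hu (ex_intro _ g fE).
    have sfE : size f = (size g + size h).-1 by rewrite fE size_mul.
    have [ug [sg' [ugu hsg gE]]] : exists u (s : seq {poly D}),
      [/\ u \is a GRing.unit, all_primes s & g = u * \prod_(q <- s) q].
      by apply: IH g0; move: hsf; rewrite sfE; lia.
    have [uh [sh' [uhu hsh hE]]] : exists u (s : seq {poly D}),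
      [/\ u \is a GRing.unit, all_primes s & h = u * \prod_(q <- s) q].
      by apply: IH h0; move: hsf; rewrite sfE; lia.
    exists (ug * uh), (sg' ++ sh'); split.
    - by rewrite unitrM ugu.
    - by move=> r; rewrite mem_cat => /orP[]; [exact: hsg|exact: hsh].
    by rewrite big_cat fE gE hE /=; ring.
  have fp : primeE f.
    apply: prim_irr_prime => //.
      by move=> p pp pd; apply: hnp; exists p.
    move=> g h fE; case: (boolP (g \is a GRing.unit)) => gu; first by left.
    case: (boolP (h \is a GRing.unit)) => hu; first by right.
    by exfalso; apply: hirr; exists g, h; split.
  exists 1, [:: f]; split; rewrite ?unitr1 ?big_seq1 ?mul1r //.
  by move=> r; rewrite inE => /eqP->.
move=> hsf f0; have l0 : lead_coef f != 0 by rewrite lead_coef_eq0.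
have [u0 [s0 [uu0 hs0 lE0]]] := hD l0.
elim: (size s0) {-2}s0 (leqnn (size s0)) f hsf f0 l0 u0 uu0 hs0 lE0
   => [|k IHk] s sk {}f hsf f0 l0 u uu hs lE.
all: case: (classic (exists p, primeE p /\ rdvd p%:P f)) =>
   [[p [pp [h fE]]]|noprime].
-
  exfalso; move: sk; rewrite leqn0 size_eq0 => /eqP se; move: lE.
  rewrite se big_nil mulr1 fE lead_coefM lead_coefC => hl.
  have [_ pu _] := pp; move/negP: pu; apply.
  by apply: (@rdvd_unit _ _ (lead_coef h * p)); [apply: rdvd_mull; apply: rdvd_refl|rewrite hl].
- exact: NP.
-
  have [p0 pu _] := pp.
  have h0 : h != 0 by apply: contraNneq f0 => h0; rewrite fE h0 mul0r.
  have hl : lead_coef f = lead_coef h * p by rewrite fE lead_coefM lead_coefC.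
  have : rdvd p (\prod_(j <- s) j).
    exists (u^-1 * lead_coef h); apply: (mulfI (unit_neq0 uu)).
    by rewrite -lE hl !mulrA mulrV // mul1r.
  case/(prime_dvd_prod pp) => q qs /(prime_dvd_prime pp (hs q qs)) [w wu qE].
  have [u' [s' [uu' hs' hE]]] : exists u' (s' : seq {poly D}),
      [/\ u' \is a GRing.unit, all_primes s' & h = u' * \prod_(q <- s') q].
    apply: (IHk (rem q s) _ h _ h0 _ (u * w)).
    - by rewrite size_rem // -subn1 leq_subLR add1n.
    - by rewrite fE size_mul ?polyC_eq0 // size_polyC p0 addn1 /= in hsf.
    - by rewrite lead_coef_eq0.
    - by rewrite unitrM uu.
    - by move=> r /mem_rem rs; apply: hs.
    apply: (mulIf p0); rewrite -hl lE (big_rem _ qs) qE /=; ring.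
  exists u', (p%:P :: s'); split => //.
    move=> r; rewrite inE => /orP[/eqP->|]; [exact: primeC|exact: hs'].
  by rewrite big_cons fE hE; ring.
- exact: NP.
Qed.

End PolyPF2.

Lemma shift_coef (R : comNzRingType) (p : {poly R}) i :
  (p^:P \Po ('X + ('X)%:P))`_i = p^`N(i).
Proof.
elim/poly_ind: p i => [|p c IH] i.
  by rewrite rmorph0 comp_poly0 coef0 nderivn_poly0 // size_poly0.
rewrite rmorphD rmorphM /= map_polyX map_polyC /= comp_poly_MXaddC.
rewrite mulrDr coefD coefD coefMX coefMC coefC IH.
case: i => [|n] /=; first by rewrite add0r nderivn0 IH nderivn0.
by rewrite addr0 nderivnMXaddC IH.
Qed.

Lemma coefXadd1 (R : nzRingType) n k : (('X + 1 : {poly R})^+n)`_k = ('C(n, k))%:R.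
Proof.
elim: n k => [|n IH] k.
  by rewrite expr0 coef1 bin0n; case: k.
rewrite exprS mulrDl mul1r coefD coefXM; case: k => [|k] /=.
  by rewrite add0r IH !bin0.
by rewrite !IH binS natrD addrC.
Qed.

Lemma comp_poly_expn (R : comNzRingType) (p r : {poly R}) q :
  (p ^+ q) \Po r = (p \Po r) ^+ q.
Proof.
elim: q => [|q IH]; first by rewrite !expr0 -polyC1 comp_polyC.
by rewrite !exprS comp_polyM IH.
Qed.

Lemma NT (R : comNzRingType) (d n : nat) : (0 < d)%N -> (d <= n)%N ->
  (forall i, (0 < i < d)%N -> 'C(d, i)%:R = 0 :> R) ->
  (forall i, (n - d < i < n)%N -> 'C(n, i)%:R = 0 :> R) -> (d %| n)%N.
Proof.
move=> d0 dn hd hn.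
set q := (n %/ d)%N; set s := (n %% d)%N.
have nE : n = (q * d + s)%N by rewrite /q /s -divn_eq.
have sd : (s < d)%N by rewrite /s ltn_mod.
rewrite /dvdn -/s; case: (posnP s) => // s0'.
have q0 : (0 < q)%N.
  rewrite lt0n; apply/eqP => q0; move: dn; rewrite nE q0 mul0n add0n.
  by rewrite leqNgt sd.
pose P : {poly R} := 'X + 1.
have Pd : P ^+ d = 'X^d + 1.
  apply/polyP => k; rewrite coefXadd1 coefD coefXn coef1.
  case: (ltngtP k d) => [kd|dk|->]; last by rewrite binn (gtn_eqF d0) addr0.
  - case: k kd => [|k] kd; first by rewrite bin0 add0r.
    by rewrite hd ?kd //= add0r.
  - by rewrite bin_small // (gtn_eqF (ltn_trans d0 dk)) addr0.
have Pqd : P ^+ (q * d) = (P ^+ q) \Po 'X^d.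
  rewrite mulnC exprM Pd comp_poly_expn; congr (_ ^+ _).
  by rewrite /P comp_polyD comp_polyX -polyC1 comp_polyC.
have : (P ^+ n)`_(q * d) = 1.
  rewrite nE exprD Pqd coefM big_ord_recr /= subnn.
  rewrite coef_comp_poly_Xn // dvdn_mull // mulnK // coefXadd1 coefXadd1 !binn.
  rewrite bin0 mulr1 big1 ?add0r // => j _.
  rewrite coef_comp_poly_Xn //; case: ifP => [/dvdnP [e je]|]; last by rewrite mul0r.
  rewrite [X in _ * X]coefXadd1 bin_small ?mulr0 //.
  have eq' : (e < q)%N by have := ltn_ord j; rewrite je ltn_pmul2r.
  rewrite je -mulnBl; apply: (leq_trans sd); rewrite leq_pmull // subn_gt0 //.
have hq : (n - d < q * d < n)%N by rewrite nE; move: sd s0'; lia.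
by rewrite coefXadd1 hn // => /esym/eqP; rewrite oner_eq0.
Qed.

Section Core.
Variable B : idomainType.
Variable A : pred B.
Hypothesis Asr : subring_closed A.
Hypothesis hPF : PF B.
Variable phi : {rmorphism B -> {poly B}}.
Hypothesis hexp : is_exp_map A phi.
Hypothesis hinv : forall b, b \in A <-> b \in invariants phi.
Hypothesis hnid : ~ exp_map_is_id phi.
Variable pi : {rmorphism B -> B}.
Hypothesis pi_idem : forall b, pi (pi b) = pi b.
Hypothesis pi_img : forall x, x \in A <-> exists b, pi b = x.

Definition Ak : {pred B} := A.
HB.instance Definition _ := GRing.isSubringClosed.Build B Ak Asr.

Lemma inA b : b \in Ak <-> phi b = b%:P.
Proof.
split; first by move=> h; case: hexp => h1 _ _; apply: h1.
by move=> h; apply/hinv; rewrite /invariants unfold_in /= h.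
Qed.

Lemma phiA a : a \in Ak -> phi a = a%:P.
Proof. by move/inA. Qed.

Lemma phi0 b : (phi b).[0] = b.
Proof. by case: hexp. Qed.

Lemma phi_eq0 b : (phi b == 0) = (b == 0).
Proof.
apply/eqP/eqP => [h|->]; last by rewrite rmorph0.
by rewrite -(phi0 b) h horner0.
Qed.

Definition deg b := (size (phi b)).-1.
Definition lc b := lead_coef (phi b).

Lemma size_phi b : b != 0 -> size (phi b) = (deg b).+1.
Proof. by move=> b0; rewrite /deg prednK // lt0n size_poly_eq0 phi_eq0. Qed.

Lemma degA b : (deg b == 0)%N = (b \in Ak).
Proof.
apply/eqP/idP => [h|/inA h]; last by rewrite /deg h size_polyC; case: (_ != 0).
apply/inA; have : (size (phi b) <= 1)%N by move: h; rewrite /deg; case: (size _) => [|[]].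
by move/size1_polyC => ->; rewrite -horner_coef0 phi0.
Qed.

Lemma lc_eq0 b : (lc b == 0) = (b == 0).
Proof. by rewrite /lc lead_coef_eq0 phi_eq0. Qed.

Lemma degM b c : b != 0 -> c != 0 -> deg (b * c) = (deg b + deg c)%N.
Proof.
move=> b0 c0; have hb := size_phi b0; have hc := size_phi c0.
by rewrite {1}/deg rmorphM size_mul ?phi_eq0 // hb hc addSn addnS.
Qed.

Lemma lcM b c : lc (b * c) = lc b * lc c.
Proof. by rewrite /lc rmorphM lead_coefM. Qed.

Lemma fclosed x y : x * y \in Ak -> x * y != 0 -> x \in Ak.
Proof.
move=> hA h0; have [x0 y0] : x != 0 /\ y != 0.
  by split; apply: contraNneq h0 => ->; rewrite ?mul0r ?mulr0.
rewrite -degA; move: hA; rewrite -degA degM //.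
by rewrite addn_eq0 => /andP[].
Qed.

Lemma nder b i : phi ((phi b)`_i) = (phi b)^`N(i).
Proof. by case: hexp => _ _ h3; rewrite -coef_map h3 shift_coef. Qed.

Lemma lcA b : lc b \in Ak.
Proof.
apply/inA; rewrite /lc lead_coefE nder; apply/polyP => k.
rewrite coef_nderivn coefC; case: k => [|k].
  by rewrite addn0 binn mulr1n.
rewrite nth_default ?mul0rn //.
by case: (size (phi b)) => [|m] //=; rewrite addnS ltnS leq_addr.
Qed.

Lemma piA b : pi b \in Ak.
Proof. by apply/pi_img; exists b. Qed.

Lemma pi_id a : a \in Ak -> pi a = a.
Proof. by move/pi_img => [b <-]; rewrite pi_idem. Qed.

Lemma exists_nonA : exists b, b \notin Ak.
Proof.
apply: NNPP => h; apply: hnid => b; apply/inA.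
by apply: NNPP => hb; apply: h; exists b; apply/negP.
Qed.

Lemma size_nder b i : leq (size (phi ((phi b)`_i))) (deg b - i).+1.
Proof.
rewrite nder; apply/leq_sizeP => j hj; rewrite coef_nderivn nth_default ?mul0rn //.
have : (size (phi b) <= (deg b).+1)%N by rewrite /deg; case: (size _).
move: hj; set D1 := deg b; set S1 := size (phi b). lia.
Qed.

Section WithD.
Variable d : nat.
Hypothesis dpos : (0 < d)%N.
Hypothesis dmin : forall b, b \notin Ak -> (d <= deg b)%N.
Variable g0 : B.
Hypothesis g0A : g0 \notin Ak.
Hypothesis g0d : deg g0 = d.

Lemma deg_small b : (deg b < d)%N -> b \in Ak.
Proof. by move=> h; apply/negPn/negP => /dmin; rewrite leqNgt h. Qed.

Lemma binom_vanish b i : (deg b - d < i < deg b)%N -> 'C(deg b, i)%:R = 0 :> B.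
Proof.
move=> /andP[h1 h2].
have b0 : b != 0 by apply: contraTneq h2 => ->; rewrite /deg rmorph0 size_poly0.
set c := (phi b)`_i.
have cA : c \in Ak.
  apply: deg_small; have h := size_nder b i; rewrite -/c in h.
  rewrite {1}/deg; move: h h1 h2; set S := size (phi c); set D1 := deg b.
  rewrite -subn1; lia.
have := congr1 (fun p : {poly B} => p`_(deg b - i)) (phiA cA).
rewrite /= nder coef_nderivn coefC subnKC ?(ltnW h2) //.
rewrite (gtn_eqF (_ : (0 < deg b - i)%N)) ?subn_gt0 //.
have -> : (phi b)`_(deg b) = lc b by rewrite /lc lead_coefE.
rewrite -(mulr_natr (lc b)) => /eqP; rewrite mulf_eq0 lc_eq0 (negbTE b0) /=.
by move/eqP.
Qed.

Lemma d_dvd b : (d %| deg b)%N.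
Proof.
have [bA|bA] := boolP (b \in Ak); first by move: bA; rewrite -degA => /eqP->.
apply: (@NT B d (deg b) dpos (dmin bA)).
  move=> i hi; rewrite -g0d; apply: binom_vanish; rewrite g0d subnn; exact hi.
exact: binom_vanish.
Qed.

Section WithG.
Variable g : B.
Hypothesis gd : deg g = d.
Hypothesis pg : pi g = 0.

Lemma g_neq0 : g != 0.
Proof. by apply: contraTneq dpos => gz; rewrite -gd gz /deg rmorph0 size_poly0. Qed.

Lemma polyOver_decomp P : P \is a polyOver Ak ->
  Poly (behead P) \is a polyOver Ak /\ P`_0 \in Ak.
Proof.
move/polyOverP => h; split => //; apply/polyOverP => i.
by rewrite coef_Poly nth_behead.
Qed.

Lemma peelP p y P : p \in Ak -> primeE p -> ~ rdvd p g ->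
  P \is a polyOver Ak -> p * y = P.[g] -> exists2 Q, Q \is a polyOver Ak & y = Q.[g].
Proof.
move=> pA pp pgn; have [p0 _ ppr] := pp.
move: {2}(size P) (leqnn (size P)) => n; elim: n P y => [|n IH] P y hs PA hy.
  move: hs; rewrite leqn0 size_poly_eq0 => /eqP P0; move: hy; rewrite P0 horner0.
  move/eqP; rewrite mulf_eq0 (negbTE p0) /= => /eqP->.
  by exists 0; rewrite ?rpred0 ?horner0.
have [P0A aA] := polyOver_decomp PA.
set P0 := Poly (behead P) in P0A; set a := P`_0 in aA.
have PE : P = P0 * 'X + a%:P by rewrite /P0 /a -poly_decomp.
rewrite PE hornerMXaddC in hy.
have ha : a = p * pi y.
  have := congr1 pi hy; rewrite rmorphM rmorphD rmorphM pg mulr0 add0r.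
  by rewrite (pi_id pA) (pi_id aA) => ->.
have h1 : P0.[g] * g = p * (y - pi y) by rewrite mulrBr hy ha; ring.
have : rdvd p (P0.[g] * g) by rewrite h1; exists (y - pi y); ring.
case/ppr => [[z hz]|//].
have [Q0 Q0A hQ0] : exists2 Q, Q \is a polyOver Ak & z = Q.[g].
  apply: (IH P0) => //; last by rewrite hz mulrC.
  have [P00|P00] := eqVneq P 0; first by rewrite /P0 P00 polyseq0 /= size_poly0.
  by rewrite -ltnS (leq_trans (size_decomp P00)).
exists (Q0 * 'X + (pi y)%:P).
  by rewrite rpredD ?rpredM ?polyOverX ?polyOverC ?piA.
rewrite hornerMXaddC -hQ0.
have : p * (y - pi y) = p * (z * g) by rewrite -h1 hz; ring.
by move/(mulfI p0) => h2; rewrite -h2; ring.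
Qed.

Lemma unit_inv_A u : u \in Ak -> u \is a GRing.unit -> u^-1 \in Ak.
Proof.
move=> uA uu; apply: (@fclosed _ u); rewrite mulVr ?rpred1 ?oner_neq0 //.
Qed.

Lemma peel_list u s y P : u \in Ak -> u \is a GRing.unit ->
  (forall p, p \in s -> [/\ p \in Ak, primeE p & ~ rdvd p g]) ->
  P \is a polyOver Ak -> (u * \prod_(p <- s) p) * y = P.[g] ->
  exists2 Q, Q \is a polyOver Ak & y = Q.[g].
Proof.
move=> uA uu; elim: s y P => [|p s IH] y P hs PA.
  rewrite big_nil mulr1 => h; exists (u^-1%:P * P).
    by rewrite rpredM ?polyOverC ?unit_inv_A.
  by rewrite hornerCM -h mulKr.
have [pA pp pn] := hs p (mem_head _ _).
rewrite big_cons => h.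
have [Q QA hQ] : exists2 Q, Q \is a polyOver Ak & u * \prod_(j <- s) j * y = Q.[g].
  by apply: (peelP pA pp pn PA); rewrite -h; ring.
by apply: (IH _ Q) => // r rs; apply: hs; rewrite inE rs orbT.
Qed.

Hypothesis hnd : forall p, primeE p -> rdvd p (lc g) -> ~ rdvd p g.

Lemma peel_lc y P : P \is a polyOver Ak -> lc g * y = P.[g] ->
  exists2 Q, Q \is a polyOver Ak & y = Q.[g].
Proof.
move=> PA h.
have c0 : lc g != 0 by rewrite lc_eq0 g_neq0.
have [u [s [uu hs cE]]] := hPF c0.
have cA := lcA g.
apply: (@peel_list u s y P) => //.
- by apply: (@fclosed _ (\prod_(p <- s) p)); rewrite -cE.
- move=> p ps; have pp := hs p ps.
  have pd : rdvd p (lc g) by rewrite cE; apply: rdvd_mull; apply: rdvd_prod_mem.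
  split => //; last by apply: hnd.
  have [w wE] := pd; apply: (@fclosed _ w); rewrite mulrC -wE //.
by rewrite -cE.
Qed.

Lemma peel_lck k y P : P \is a polyOver Ak -> lc g ^+ k * y = P.[g] ->
  exists2 Q, Q \is a polyOver Ak & y = Q.[g].
Proof.
elim: k y P => [|k IH] y P PA h.
  by exists P => //; rewrite -h expr0 mul1r.
have [Q QA hQ] : exists2 Q, Q \is a polyOver Ak & lc g ^+ k * y = Q.[g].
  by apply: (peel_lc PA); rewrite -h exprS mulrA.
exact: (IH _ Q).
Qed.

Lemma gen_deg n b : (deg b <= n)%N -> exists2 Q, Q \is a polyOver Ak & b = Q.[g].
Proof.
elim: n b => [|n IH] b hb.
  have bA : b \in Ak by rewrite -degA -leqn0.
  by exists b%:P; rewrite ?polyOverC ?hornerC.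
have [bA|bA] := boolP (b \in Ak); first by exists b%:P; rewrite ?polyOverC ?hornerC.
have b0 : b != 0 by apply: contraNneq bA => ->; rewrite rpred0.
set m := deg b in hb; set k := (m %/ d)%N.
have mE : m = (k * d)%N by rewrite /k divnK // d_dvd.
have m0 : (0 < m)%N by rewrite lt0n /m degA.
set a := lc b; set c := lc g.
have aA : a \in Ak := lcA b.
have cA : c \in Ak := lcA g.
set b' := c ^+ k * b - a * g ^+ k.
have hb' : (deg b' <= n)%N.
  suff : (size (phi b') <= m)%N by rewrite /deg; move: hb m0; set S := size _; lia.
  have e1 : phi (c ^+ k) = (c ^+ k)%:P by rewrite phiA ?rpredX.
  have e2 : phi (g ^+ k) = phi g ^+ k by rewrite rmorphXn.
  rewrite /b' rmorphB !rmorphM e1 e2 (phiA aA).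
  apply/leq_sizeP => j hj; rewrite coefB !coefCM.
  have sb : size (phi b) = m.+1 := size_phi b0.
  have pg0 : phi g != 0 by rewrite phi_eq0 g_neq0.
  have sg : size (phi g ^+ k) = m.+1.
    have := size_exp (phi g) k; rewrite -/(deg g) gd mulnC -mE.
    by move=> h; rewrite -h prednK // lt0n size_poly_eq0 expf_neq0.
  move: hj; rewrite leq_eqVlt => /orP[/eqP<-|hj].
    have -> : (phi b)`_m = a by rewrite /a /lc lead_coefE sb.
    have -> : (phi g ^+ k)`_m = c ^+ k by rewrite /c /lc -lead_coef_exp lead_coefE sg.
    by rewrite mulrC subrr.
  by rewrite !nth_default ?mulr0 ?subrr ?sb ?sg.
have [Q QA hQ] := IH b' hb'.
apply: (@peel_lck k b (Q + a%:P * 'X^k)).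
  by rewrite rpredD ?rpredM ?polyOverC ?rpredX ?polyOverX.
by rewrite hornerD hornerCM hornerXn -hQ /b'; ring.
Qed.

Lemma transc P : P \is a polyOver Ak -> P.[g] = 0 -> P = 0.
Proof.
move=> PA h; apply/eqP.
have hm : map_poly phi P = map_poly polyC P.
  by apply/polyP => i; rewrite !coef_map /= phiA //; apply: (polyOverP PA).
have := congr1 phi h; rewrite rmorph0 -horner_map /= hm => /eqP.
have -> : (map_poly polyC P).[phi g] = P \Po phi g by [].
by rewrite comp_poly_eq0 // size_phi ?g_neq0 // gd ltnS.
Qed.

End WithG.

Lemma select k g : deg g = d -> pi g = 0 ->
  (exists u (s : seq B), [/\ u \is a GRing.unit, all_primes s, (size s <= k)%N &
      lc g = u * \prod_(q <- s) q]) -> is_poly_ring_in_one_var_over A.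
Proof.
have fin : forall g, deg g = d -> pi g = 0 ->
    ~ (exists p, [/\ primeE p, rdvd p (lc g) & rdvd p g]) ->
    is_poly_ring_in_one_var_over A.
  move=> {}g gd pg hn; exists g; split.
    by move=> b; have [Q QA hQ] := gen_deg gd pg (fun p pp pc pg' => hn (ex_intro _ p (And3 pp pc pg'))) (leqnn (deg b)); exists Q.
  by move=> P PA; apply: (transc gd).
elim: k g => [|k IH] g gd pg [u [s [uu hs sk lE]]].
all: case: (classic (exists p, [/\ primeE p, rdvd p (lc g) & rdvd p g])) =>
   [[p [pp pc pgd]]|hnd]; try by apply: (fin g gd pg hnd).
- exfalso; move: sk; rewrite leqn0 size_eq0 => /eqP se.
  have [_ pu _] := pp; move/negP: pu; apply; apply: (rdvd_unit pc).
  by rewrite lE se big_nil mulr1.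
have [p0 pu ppr] := pp.
have c0 : lc g != 0 by rewrite lc_eq0 g_neq0.
have pA : p \in Ak.
  have [z zE] := pc; apply: (@fclosed _ z); rewrite mulrC -zE ?lcA //.
have [w wE] := pgd.
have w0 : w != 0 by apply: contraNneq (g_neq0 gd) => w0; rewrite wE w0 mul0r.
have dw : deg w = d by rewrite -gd wE degM // (_ : deg p = 0%N) ?addn0 //; apply/eqP; rewrite degA.
have pw : pi w = 0.
  by move: pg; rewrite wE rmorphM (pi_id pA) => /eqP; rewrite mulf_eq0 (negbTE p0) orbF => /eqP.
have lw : lc g = lc w * p by rewrite wE lcM /lc (phiA pA) lead_coefC.
have : rdvd p (\prod_(j <- s) j).
  exists (u^-1 * lc w); apply: (mulfI (unit_neq0 uu)).
  by rewrite -lE lw !mulrA mulrV // mul1r.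
case/(prime_dvd_prod pp) => q qs /(prime_dvd_prime pp (hs q qs)) [v vu qE].
apply: (IH w dw pw); exists (u * v), (rem q s); split.
- by rewrite unitrM uu.
- by move=> r /mem_rem rs; apply: hs.
- by rewrite size_rem // -subn1 leq_subLR add1n.
apply: (mulIf p0); rewrite -lw lE (big_rem _ qs) qE /=; ring.
Qed.

End WithD.

Theorem core : is_poly_ring_in_one_var_over A.
Proof.
have [b bA] := exists_nonA.
have [d [[g0 [g0A g0d]] dmin]] := @ex_min_nat
   (fun n => exists b, b \notin Ak /\ deg b = n) (deg b) (ex_intro _ b (conj bA erefl)).
have dpos : (0 < d)%N by rewrite lt0n -g0d degA.
have dmin' : forall b, b \notin Ak -> (d <= deg b)%N by move=> c cA; apply: dmin; exists c.
set g := g0 - pi g0.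
have g00 : g0 != 0 by apply: contraNneq g0A => ->; rewrite rpred0.
have spg : (size ((pi g0)%:P) < size (phi g0))%N.
  by rewrite size_phi // g0d ltnS (leq_trans (size_polyC_leq1 _)).
have phig : phi g = phi g0 + - (pi g0)%:P by rewrite rmorphB (phiA (piA g0)).
have gd : deg g = d by rewrite -g0d /deg phig size_polyDl // size_polyN.
have pg : pi g = 0 by rewrite rmorphB pi_idem subrr.
have lg : lc g = lc g0 by rewrite /lc phig lead_coefDl // size_polyN.
have c0 : lc g != 0 by rewrite lg lc_eq0.
have [u [s [uu hs cE]]] := hPF c0.
by apply: (@select d dpos dmin' g0 g0A g0d (size s) g gd pg); exists u, s; split.
Qed.



End Core.

Section Construct.
Variable B : idomainType.
Variable A : pred B.
Hypothesis Asr : subring_closed A.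
Variable T : B.
Hypothesis hgen : forall b : B, exists p : {poly B}, p \is a polyOver A /\ b = p.[T].
Hypothesis htr : forall p : {poly B}, p \is a polyOver A -> p.[T] = 0 -> p = 0.

Definition Ak2 : {pred B} := A.
HB.instance Definition _ := GRing.isSubringClosed.Build B Ak2 Asr.

Lemma hgen' b : exists p : {poly B}, (p \is a polyOver Ak2) && (p.[T] == b).
Proof. by have [p [pA ->]] := hgen b; exists p; rewrite pA eqxx. Qed.

Definition rep b := xchoose (hgen' b).

Lemma rep_over b : rep b \is a polyOver Ak2.
Proof. by have /andP[] := xchooseP (hgen' b). Qed.

Lemma rep_eval b : (rep b).[T] = b.
Proof. by have /andP[_ /eqP] := xchooseP (hgen' b). Qed.

Lemma rep_uniq b p : p \is a polyOver Ak2 -> p.[T] = b -> rep b = p.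
Proof.
move=> pA pT; apply/eqP; rewrite -subr_eq0; apply/eqP; apply: (htr (p := rep b - p)).
  by change (rep b - p \is a polyOver Ak2); rewrite rpredB ?rep_over.
by rewrite hornerD hornerN rep_eval pT subrr.
Qed.

Lemma rep_sub x y : rep (x - y) = rep x - rep y.
Proof. by apply: rep_uniq; rewrite ?rpredB ?rep_over // hornerD hornerN !rep_eval. Qed.

Lemma rep_mul x y : rep (x * y) = rep x * rep y.
Proof. by apply: rep_uniq; rewrite ?rpredM ?rep_over // hornerM !rep_eval. Qed.

Lemma rep1 : rep 1 = 1.
Proof. by apply: rep_uniq; rewrite ?rpred1 // hornerC. Qed.

Lemma repC a : a \in A -> rep a = a%:P.
Proof. by move=> aA; apply: rep_uniq; rewrite ?polyOverC // hornerC. Qed.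

Lemma repT : rep T = 'X.
Proof. by apply: rep_uniq; rewrite ?polyOverX // hornerX. Qed.

Definition piF b : B := let _ := (Asr, htr) in (rep b)`_0.

Lemma piF_sub : zmod_morphism piF.
Proof. by move=> x y; rewrite /piF rep_sub coefB. Qed.
Lemma piF_mon : monoid_morphism piF.
Proof. by split; [rewrite /piF rep1 coef1|move=> x y; rewrite /piF rep_mul coef0M]. Qed.
HB.instance Definition _ := GRing.isZmodMorphism.Build B B piF piF_sub.
HB.instance Definition _ := GRing.isMonoidMorphism.Build B B piF piF_mon.

Lemma piF_A b : piF b \in A.
Proof. exact: (polyOverP (rep_over b)). Qed.

Definition xT : {poly B} := T%:P + 'X.
Definition phiF b : {poly B} := let _ := (Asr, htr) in rep b \Po xT.

Lemma phiF_sub : zmod_morphism phiF.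
Proof. by move=> x y; rewrite /phiF rep_sub comp_polyB. Qed.
Lemma phiF_mon : monoid_morphism phiF.
Proof.
split; first by rewrite /phiF rep1 -polyC1 comp_polyC.
by move=> x y; rewrite /phiF rep_mul comp_polyM.
Qed.
HB.instance Definition _ := GRing.isZmodMorphism.Build B {poly B} phiF phiF_sub.
HB.instance Definition _ := GRing.isMonoidMorphism.Build B {poly B} phiF phiF_mon.

Lemma phiFC a : a \in A -> phiF a = a%:P.
Proof. by move=> aA; rewrite /phiF repC // comp_polyC. Qed.

Lemma size_phiF b : size (phiF b) = size (rep b).
Proof. by rewrite /phiF size_comp_poly2 // /xT addrC size_XaddC. Qed.

Lemma map_phiF p : p \is a polyOver Ak2 -> map_poly phiF p = p^:P.
Proof.
move=> pA; apply/polyP => i; rewrite !coef_map /=.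
by rewrite phiFC //; apply: (polyOverP pA).
Qed.

Lemma retract_ok : is_retract A.
Proof.
exists (piF : {rmorphism B -> B}); split.
  by move=> b; rewrite /= /piF repC ?piF_A // coefC.
move=> x; split => [xA|[b <-]]; last exact: piF_A.
by exists x; rewrite /= /piF repC // coefC.
Qed.

Lemma exp_ok : is_exp_map A (phiF : {rmorphism B -> {poly B}}).
Proof.
split.
- exact: phiFC.
- by move=> b; rewrite /= /phiF horner_comp /xT hornerD hornerC hornerX addr0 rep_eval.
move=> b /=; set p := rep b.
have pA : p \is a polyOver Ak2 by apply: rep_over.
have L : map_poly phiF (phiF b) = p^:P \Po (map_poly phiF xT).
  have -> : phiF b = p \Po xT by [].
  rewrite map_comp_poly; change (map_poly phiF p \Po map_poly phiF xT = p^:P \Po map_poly phiF xT).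
  by rewrite (map_phiF pA).
have pT : phiF T = xT by rewrite /phiF repT comp_polyX.
have mx : map_poly phiF xT = xT%:P + 'X.
  by rewrite {1}/xT rmorphD /= map_polyX map_polyC /= pT.
have R : (phiF b)^:P \Po ('X + ('X)%:P) = p^:P \Po (xT^:P \Po ('X + ('X)%:P)).
  have -> : phiF b = p \Po xT by [].
  rewrite map_comp_poly; change ((p^:P \Po xT^:P) \Po ('X + ('X)%:P) = p^:P \Po (xT^:P \Po ('X + ('X)%:P))).
  by rewrite comp_polyA.
have xc : xT^:P \Po ('X + ('X)%:P) = (T%:P)%:P + ('X + ('X)%:P).
  by rewrite /xT rmorphD /= map_polyC map_polyX comp_polyD comp_polyC comp_polyX.
rewrite L R mx xc; congr (_ \Po _).
by rewrite /xT rmorphD /=; ring.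
Qed.


Lemma nonid_ok : ~ exp_map_is_id (phiF : {rmorphism B -> {poly B}}).
Proof.
move=> h; have := congr1 (fun q : {poly B} => q`_1) (h T).
rewrite /= /phiF repT comp_polyX /xT coefD coefC coefX /= add0r.
by move/eqP; rewrite oner_eq0.
Qed.

Lemma inv_ok b : b \in A <-> b \in invariants (phiF : {rmorphism B -> {poly B}}).
Proof.
rewrite /invariants unfold_in /=; split => [bA|/eqP h]; first by apply/eqP; apply: phiFC.
have h' : phiF b = b%:P := h.
have : (size (rep b) <= 1)%N by rewrite -size_phiF h' size_polyC_leq1.
move/size1_polyC => rE; rewrite -(rep_eval b) rE hornerC.
exact: (polyOverP (rep_over b)).
Qed.

End Construct.

Lemma II_to_I (B : idomainType) (A : pred B) : subring_closed A ->
  is_poly_ring_in_one_var_over A ->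
  is_retract A /\ exists phi : {rmorphism B -> {poly B}},
         is_exp_map A phi /\ ~ exp_map_is_id phi /\
         (forall b, b \in A <-> b \in invariants phi).
Proof.
move=> Asr [T [hgen htr]]; split; first exact: (retract_ok Asr hgen htr).
exists (@phiF B A Asr T hgen htr : {rmorphism B -> {poly B}}); split; first exact: exp_ok.
split; first exact: nonid_ok.
exact: inv_ok.
Qed.



Lemma PF_poly_n (R : idomainType) n : PF R -> PF (poly_ring_n R n).
Proof. by move=> hR; elim: n => [|n IH] //=; apply: PF_poly. Qed.

Theorem proposition4p2 :
  (forall (B : idomainType) (A : pred B),
     is_UFD B -> subring_closed A ->
     ((is_retract A /\
       exists phi : {rmorphism B -> {poly B}},
         is_exp_map A phi /\ ~ exp_map_is_id phi /\
         (forall b, b \in A <-> b \in invariants phi))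
      <-> is_poly_ring_in_one_var_over A))
  /\
  (forall (R : idomainType) (n : nat) (A : pred (poly_ring_n R n)),
     is_UFD R -> subring_closed A -> (forall r : R, const_n n r \in A) ->
     (is_retract A /\
       exists phi : {rmorphism (poly_ring_n R n) -> {poly (poly_ring_n R n)}},
         is_exp_map A phi /\ ~ exp_map_is_id phi /\
         (forall b, b \in A <-> b \in invariants phi)) ->
     is_poly_ring_in_one_var_over A).
Proof.
split.
  move=> B A hU Asr; split; last exact: II_to_I.
  move=> [[pi [idem img]] [phi [hexp [hnid hinv]]]].
  exact: (@core B A Asr (UFD_PF hU) phi hexp hinv hnid pi idem img).
move=> R n A hU Asr _ [[pi [idem img]] [phi [hexp [hnid hinv]]]].
exact: (@core _ A Asr (@PF_poly_n R n (UFD_PF hU)) phi hexp hinv hnid pi idem img).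
Qed.
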